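(* Let $\mathcal{H}$ be a complex Hilbert space of $\mathbb{C}^n$-valued functions, with scalar product $\langle\cdot,\cdot\rangle$. Let $D$ be a selfadjoint operator on $\mathcal{H}$ with domain $\mathcal{D}_0$. Let $W_L,W_R$ be bounded selfadjoint operators on $\mathcal{H}$ such that: - $W_LW_R=W_RW_L$; - $W_L^{-1}$ and $W_R^{-1}$ exist and are bounded; - $W_RW_L^{-1}$ is selfadjoint; - $W_RW_L^{-1}\ge c\,\mathrm{id}$ for some $c>0$. Define $M=W_L\,D\,W_R$ with domain $\mathcal{D}_R:=W_R^{-1}\mathcal{D}_0$. Assume that complex conjugation $(C\Psi)(x)=\overline{\Psi(x)}$ satisfies $C\mathcal{D}_R=\mathcal{D}_R$ and $CMC=-M$. Let $\mathcal{H}_W$ denote $\mathcal{H}$ equipped with the scalar product $\langle\Phi,\Psi\rangle_W:=\langle\Phi,W\Psi\rangle$, where $W:=W_L^{-1}W_R$. Then $M$ is selfadjoint on $\mathcal{H}_W$ with dense domain $\mathcal{D}_R$.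
   Context: An operator $M=W_LDW_R$ satisfying these hypotheses is called a generalized Maxwell-type operator. *)

(* Defs.v *)
From mathcomp Require Import all_boot all_order all_algebra.
From mathcomp Require Import reals.
From mathcomp.real_closed Require Export complex.
Import GRing.Theory Num.Theory.
Set Implicit Arguments. Unset Strict Implicit. Unset Printing Implicit Defensive.
Local Open Scope ring_scope.
Local Open Scope complex_scope.

Section HilbertDefs.
Variable R : realType.
Variable V : lmodType R[i].
Implicit Types (ip : V -> V -> R[i]) (Dom : V -> Prop) (A : V -> V).

(* scalar product: conjugate-linear in the first, linear in the second argument *)
Definition inner_product ip :=
  [/\ (forall (a : R[i]) x y z, ip x (a *: y + z) = a * ip x y + ip x z),
      (forall x y, ip y x = (ip x y)^*),
      (forall x, 0 <= ip x x) &
      (forall x, ip x x = 0 -> x = 0)].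

Definition hnorm ip (x : V) : R := Num.sqrt (complex.Re (ip x x)).

Definition complete ip :=
  forall u : nat -> V,
    (forall eps : R, 0 < eps -> exists N : nat, forall m n : nat,
        (N <= m)%N -> (N <= n)%N -> hnorm ip (u m - u n) < eps) ->
    exists l : V, forall eps : R, 0 < eps -> exists N : nat, forall n : nat,
        (N <= n)%N -> hnorm ip (u n - l) < eps.

Definition hilbert_space ip := inner_product ip /\ complete ip.

Definition subspace Dom :=
  Dom 0 /\ forall (a : R[i]) x y, Dom x -> Dom y -> Dom (a *: x + y).

Definition linear_on Dom A :=
  subspace Dom /\
  forall (a : R[i]) x y, Dom x -> Dom y -> A (a *: x + y) = a *: A x + A y.

Definition dense ip Dom :=
  forall (x : V) (eps : R), 0 < eps -> exists y, Dom y /\ hnorm ip (x - y) < eps.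

(* A with domain Dom is selfadjoint w.r.t. ip: densely defined, linear, and
   its adjoint (graph {(psi, eta) | forall phi in Dom, <A phi, psi> = <phi, eta>})
   coincides with the graph of A. *)
Definition selfadjoint ip Dom A :=
  [/\ linear_on Dom A, dense ip Dom &
      forall psi eta : V,
        (forall phi, Dom phi -> ip (A phi) psi = ip phi eta) <->
        (Dom psi /\ eta = A psi)].

Definition bounded_op ip (B : V -> V) :=
  (forall (a : R[i]) x y, B (a *: x + y) = a *: B x + B y) /\
  exists K : R, forall x, hnorm ip (B x) <= K * hnorm ip x.

Definition bounded_selfadjoint ip (B : V -> V) :=
  bounded_op ip B /\ forall x y, ip (B x) y = ip x (B y).

(* abstraction of the complex conjugation (C Psi)(x) = conj (Psi x) *)
Definition conjugation ip (C : V -> V) :=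
  [/\ (forall (a : R[i]) x y, C (a *: x + y) = a^* *: C x + C y),
      (forall x, C (C x) = x) &
      (forall x y, ip (C x) (C y) = (ip x y)^*)].

Definition weighted_ip ip (W : V -> V) : V -> V -> R[i] :=
  fun x y => ip x (W y).

End HilbertDefs.

(* Main.v *)
Require Import Defs.
From mathcomp Require Import all_boot all_order all_algebra.
From mathcomp Require Import reals.
From mathcomp.real_closed Require Import complex.
From mathcomp Require Import ring lra.
Import Order.TTheory GRing.Theory Num.Theory.
Local Open Scope ring_scope.
Local Open Scope complex_scope.

Lemma ReD_ {R : realType} (x y : R[i]) : complex.Re (x + y) = complex.Re x + complex.Re y.
Proof. by case: x; case: y. Qed.
Lemma ReN_ {R : realType} (x : R[i]) : complex.Re (- x) = - complex.Re x.
Proof. by case: x. Qed.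
Lemma Re_ge0_ {R : realType} {x : R[i]} : 0 <= x -> 0 <= complex.Re x.
Proof. by rewrite lecE => /andP[_ ]. Qed.

Section Helpers.
Variable R : realType.
Variable V : lmodType R[i].

Lemma lin0 (f : V -> V) : (forall (a : R[i]) x y, f (a *: x + y) = a *: f x + f y) ->
  f 0 = 0.
Proof.
move=> H; have := H 1 0 0; rewrite !scale1r addr0 => h.
by apply: (addrI (f 0)); rewrite addr0 -h.
Qed.
Lemma linB (f : V -> V) : (forall (a : R[i]) x y, f (a *: x + y) = a *: f x + f y) ->
  forall x y, f (x - y) = f x - f y.
Proof.
move=> H x y.
have H0 := @lin0 f H.
have HN : f (- y) = - f y.
  by have := H (-1) y 0; rewrite addr0 H0 addr0 !scaleN1r.
have := H 1 x (- y); by rewrite !scale1r HN.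
Qed.

Variable ip : V -> V -> R[i].
Hypothesis Hip : inner_product ip.

Lemma ip0r x : ip x 0 = 0.
Proof.
case: Hip => H _ _ _; have := H 1 x 0 0; rewrite scale1r addr0 mul1r => h.
by apply: (addrI (ip x 0)); rewrite addr0 -h.
Qed.
Lemma ipBr x y z : ip x (y - z) = ip x y - ip x z.
Proof.
case: Hip => H _ _ _.
have HN : ip x (- z) = - ip x z.
  by have := H (-1) x z 0; rewrite addr0 ip0r addr0 scaleN1r mulN1r.
by have := H 1 x y (- z); rewrite scale1r mul1r HN.
Qed.
Lemma ipBl x y z : ip (y - z) x = ip y x - ip z x.
Proof.
case: Hip => _ Hc _ _.
by rewrite (Hc x (y - z)) (Hc x y) (Hc x z) ipBr raddfB.
Qed.

Lemma hnorm_sq x : hnorm ip x ^+ 2 = complex.Re (ip x x).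
Proof. case: Hip => _ _ Hp _; rewrite /hnorm sqr_sqrtr //; exact: Re_ge0_. Qed.
Lemma hnorm_ge0 x : 0 <= hnorm ip x.
Proof. exact: sqrtr_ge0. Qed.

Lemma bounded_sq (B : V -> V) : bounded_op ip B ->
  exists K : R, forall x, complex.Re (ip (B x) (B x)) <= K ^+ 2 * complex.Re (ip x x).
Proof.
case=> _ [K HK]; exists K => x.
rewrite -!hnorm_sq -exprMn.
have h1 := hnorm_ge0 (B x).
have := HK x => h2.
by rewrite ler_pXn2r // ?inE //; apply: le_trans h2.
Qed.
End Helpers.
Arguments lin0 {R V f}.
Arguments linB {R V f}.
Arguments ip0r {R V ip}.
Arguments ipBr {R V ip}.
Arguments ipBl {R V ip}.
Arguments hnorm_sq {R V ip}.
Arguments hnorm_ge0 {R V} ip x.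
Arguments bounded_sq {R V ip} Hip {B}.

Theorem proposition6p2 (R : realType) (V : lmodType R[i]) (ip : V -> V -> R[i])
  (D0 : V -> Prop) (D : V -> V) (WL WR WLi WRi : V -> V) (C : V -> V) (c : R) :
  hilbert_space ip ->
  selfadjoint ip D0 D ->
  bounded_selfadjoint ip WL ->
  bounded_selfadjoint ip WR ->
  (forall x, WL (WR x) = WR (WL x)) ->
  cancel WL WLi -> cancel WLi WL -> bounded_op ip WLi ->
  cancel WR WRi -> cancel WRi WR -> bounded_op ip WRi ->
  (forall x y, ip (WR (WLi x)) y = ip x (WR (WLi y))) ->
  0 < c ->
  (forall x, c%:C * ip x x <= ip x (WR (WLi x))) ->
  conjugation ip C ->
  (forall y, (exists x, D0 (WR x) /\ C x = y) <-> D0 (WR y)) ->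
  (forall x, D0 (WR x) -> C (WL (D (WR (C x)))) = - WL (D (WR x))) ->
  selfadjoint (weighted_ip ip (fun y => WLi (WR y)))
              (fun x => D0 (WR x)) (fun x => WL (D (WR x))).
Proof.
move=> [Hip _] [[Dsub Dlin] Ddense Dadj] [[WLlin _] WLsa] [[WRlin _] WRsa]
  Hcomm WLK WLiK [WLilin WLib] WRK WRiK [WRilin WRib] Wsym _ _ _ _ _.
have WLR x : WR (WLi x) = WLi (WR x).
  apply: (can_inj WLK); by rewrite WLiK Hcomm WLiK.
have WRlin' := WRlin; have WLlin' := WLlin.
split.
- split.
  + split; first by rewrite (lin0 WRlin); case: Dsub.
    move=> a x y Hx Hy; rewrite WRlin; by case: Dsub => _; apply.
  + move=> a x y Hx Hy; rewrite WRlin Dlin //; exact: WLlin.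
- move=> x eps eps0.
  have [K1 HK1] := bounded_sq Hip (conj WRilin WRib).
  have [K3 HK3] := bounded_sq Hip (conj WLilin WLib).
  pose S := K1 ^+ 2 + K3 ^+ 2 + 1.
  have S1 : 1 <= S by rewrite /S lerDr addr_ge0 // sqr_ge0.
  have S0 : 0 < S by apply: lt_le_trans S1.
  have [y [Hy Hxy]] := Ddense (WR x) (eps / S) (divr_gt0 eps0 S0).
  exists (WRi y); split; first by rewrite WRiK.
  set u := WR x - y in Hxy.
  have Hz : x - WRi y = WRi u by rewrite /u (linB WRilin) WRK.
  rewrite /hnorm /weighted_ip Hz WRiK.
  case: (Hip) => _ Hc Hp _.
  have e1 := HK1 u; have e3 := HK3 u.
  have key := Re_ge0_ (Hp (WRi u - WLi u)).
  rewrite !(ipBl Hip) !(ipBr Hip) in key.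
  have sy : ip (WLi u) (WRi u) = ip (WRi u) (WLi u).
    by rewrite -{1}(WRiK u) -WLR Wsym WLR WRiK.
  rewrite sy !(ReD_, ReN_) in key.
  have hn0 := hnorm_ge0 ip u.
  have hlt : complex.Re (ip u u) < (eps / S) ^+ 2.
    rewrite -(hnorm_sq Hip).
    by move: Hxy; set q := eps / S; move: hn0; set h := hnorm ip u; rewrite !expr2; nra.
  rewrite -(ger0_norm (ltW eps0)) -sqrtr_sqr ltr_sqrt ?exprn_gt0 //.
  set a := complex.Re (ip (WRi u) (WRi u)) in key e1.
  set b := complex.Re (ip (WLi u) (WLi u)) in key e3.
  set m := complex.Re (ip (WRi u) (WLi u)) in key *.
  set n := complex.Re (ip u u) in e1 e3 hlt.
  have n0' : 0 <= n by apply: Re_ge0_.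
  have h1 : m <= S * n.
    have : 2 * m <= K1 ^+ 2 * n + K3 ^+ 2 * n by lra.
    have : 0 <= K1 ^+ 2 * n + K3 ^+ 2 * n.
      by rewrite addr_ge0 // mulr_ge0 // sqr_ge0.
    rewrite /S !mulrDl mul1r; lra.
  have h2 : S * n < S * (eps / S) ^+ 2 by rewrite ltr_pM2l.
  have h3 : S * (eps / S) ^+ 2 <= eps ^+ 2.
    have -> : S * (eps / S) ^+ 2 = eps ^+ 2 / S.
      by rewrite expr_div_n mulrCA [S ^+ 2]expr2 invfM mulVKf ?gt_eqF.
    rewrite ler_pdivrMr //.
    exact: ler_peMr (sqr_ge0 eps) S1.
  exact: le_lt_trans h1 (lt_le_trans h2 h3).
- move=> psi eta; rewrite /weighted_ip.
  have L1 a b : ip (WL a) (WLi (WR b)) = ip a (WR b) by rewrite WLsa WLiK.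
  have L2 p e : ip p (WLi (WR e)) = ip (WR p) (WLi e) by rewrite -WLR WRsa.
  split.
  + move=> H.
    have H' : forall u, D0 u -> ip (D u) (WR psi) = ip u (WLi eta).
      move=> u Hu; have := H (WRi u); rewrite WRiK => /(_ Hu).
      by rewrite L1 L2 WRiK.
    have [Hd He] := (Dadj (WR psi) (WLi eta)).1 H'.
    by split => //; rewrite -He WLiK.
  + move=> [Hd ->] phi Hphi.
    rewrite L1 L2 WLK.
    by apply: (proj2 (Dadj (WR psi) (D (WR psi)))).
Qed.
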